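(* Let $D$ be an API-domain and $S$ a multiplicatively closed subset of $D$ not containing $0$. Then the localization $D_S$ is an API-domain. If moreover $D$ is quasilocal, then so is $D_S$.
   Context: An API-domain is an integral domain in which for every nonempty subset $\{d_\alpha\}$ of nonzero elements there is a natural number $n$ with the ideal generated by $\{d_\alpha^n\}$ principal. Quasilocal: unique maximal ideal. *)

(* Defs.v *)
From HB Require Import structures.
From mathcomp Require Import all_boot all_order all_algebra fraction.
Set Implicit Arguments. Unset Strict Implicit. Unset Printing Implicit Defensive.
Import Order.TTheory GRing.Theory.
Local Open Scope ring_scope.

(* Throughout, a "domain" is a subring A (given as a predicate) of an integral
   domain R. The domain D itself is the full subring (fun _ => True) of D, and
   the localization D_S is the subring {a/s | a in D, s in S} of the
   fraction field {fraction D}. *)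

Section Ideals.
Variable R : idomainType.
Variable A : R -> Prop.

Definition is_ideal (I : R -> Prop) : Prop :=
  (forall x, I x -> A x) /\ I 0 /\
  (forall x y, I x -> I y -> I (x + y)) /\
  (forall a x, A a -> I x -> I (a * x)).

Definition ideal_gen (X : R -> Prop) (y : R) : Prop :=
  exists s : seq (R * R),
    (forall p, p \in s -> A p.1 /\ X p.2) /\ y = \sum_(p <- s) p.1 * p.2.

Definition principal_ideal (g : R) (y : R) : Prop := exists a, A a /\ y = a * g.

Definition is_principal_gen (X : R -> Prop) : Prop :=
  exists g, A g /\ forall y, ideal_gen X y <-> principal_ideal g y.

Definition is_API : Prop :=
  forall X : R -> Prop,
    (forall x, X x -> A x) -> (exists x, X x) -> (forall x, X x -> x != 0) ->
    exists n : nat, (0 < n)%N /\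
      is_principal_gen (fun y => exists x, X x /\ y = x ^+ n).

Definition is_maximal_ideal (I : R -> Prop) : Prop :=
  is_ideal I /\ ~ I 1 /\
  forall J, is_ideal J -> (forall x, I x -> J x) -> J 1 \/ (forall x, J x <-> I x).

Definition quasilocal : Prop :=
  exists I, is_maximal_ideal I /\
    forall J, is_maximal_ideal J -> forall x, J x <-> I x.
End Ideals.

Definition mult_closed (D : idomainType) (S : D -> Prop) : Prop :=
  S 1 /\ (forall a b, S a -> S b -> S (a * b)).

Definition localization (D : idomainType) (S : D -> Prop) : {fraction D} -> Prop :=
  fun x => exists a s, S s /\ x = tofrac a / tofrac s.

(* Main.v *)
Require Import Defs.
From HB Require Import structures.
From mathcomp Require Import all_boot all_order all_algebra fraction.
From mathcomp Require Import boolp classical_sets ring.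
Set Implicit Arguments. Unset Strict Implicit. Unset Printing Implicit Defensive.
Import GRing.Theory.
Local Open Scope classical_set_scope.
Local Open Scope ring_scope.

Lemma sum_ind (R : nmodType) (T : eqType) (Q : R -> Prop) (s : seq T) (F : T -> R) :
  Q 0 -> (forall x y, Q x -> Q y -> Q (x + y)) -> (forall p, p \in s -> Q (F p)) ->
  Q (\sum_(p <- s) F p).
Proof.
move=> Q0 QD; elim: s => [|a s IH] H; first by rewrite big_nil.
rewrite big_cons; apply: QD; first by apply: H; rewrite inE eqxx.
by apply: IH => p ps; apply: H; rewrite inE ps orbT.
Qed.

Lemma nonunit_in_max (R : idomainType) (w : R) : ~ (exists v, w * v = 1) ->
  exists M, is_maximal_ideal (fun _ : R => True) M /\ M w.
Proof.
move=> nu.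
pose P := fun B : set R => (is_ideal (fun _ => True) B /\ ~ B 1 /\ B w) \/ B = set0.
have hP : forall F : set (set R), F `<=` P -> total_on F subset -> P (\bigcup_(X in F) X).
  move=> F FP Ftot.
  have memI : forall X y, F X -> X y -> is_ideal (fun _ => True) X /\ ~ X 1 /\ X w.
    by move=> X y FX Xy; case: (FP _ FX) => // X0; move: Xy; rewrite X0.
  case: (pselect (exists X, F X /\ X w)) => [[X [FX Xw]]|nX].
  - left; split; [split; [done|split; [|split]] | split].
    * by exists X => //; case: (memI _ _ FX Xw) => [[_ [? _]] _].
    * move=> x y [X1 F1 x1] [X2 F2 y2].
      case: (Ftot _ _ F1 F2) => sub.
      - exists X2 => //; have [[_ [_ [hadd _]]] _] := memI _ _ F2 y2.
        by apply: hadd => //; apply: sub.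
      - exists X1 => //; have [[_ [_ [hadd _]]] _] := memI _ _ F1 x1.
        by apply: hadd => //; apply: sub.
    * move=> a x _ [X1 F1 x1]; exists X1 => //.
      by have [[_ [_ [_ hm]]] _] := memI _ _ F1 x1; apply: hm.
    * by case=> X1 F1 h1; have [_ [n1 _]] := memI _ _ F1 h1; apply: n1.
    * by exists X.
  - right; apply/seteqP; split => y //= [X FX Xy].
    case: (FP _ FX) => [[_ [_ Xw]]|X0]; first by apply: nX; exists X.
    by move: Xy; rewrite X0.
case: (Zorn_bigcup hP) => A [PA Amax].
pose W := fun y : R => exists c, y = c * w.
have Wi : is_ideal (fun _ => True) W /\ ~ W 1 /\ W w.
  split; [split; [done | split; [|split]] | split].
  - by exists 0; rewrite mul0r.
  - by move=> x y [c1 ->] [c2 ->]; exists (c1 + c2); rewrite mulrDl.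
  - by move=> a x _ [c ->]; exists (a * c); rewrite mulrA.
  - by case=> c e; apply: nu; exists c; rewrite mulrC.
  - by exists 1; rewrite mul1r.
case: PA => [[Ai [A1 Aw]] | A0]; last first.
  exfalso; apply: (Amax W); last by left.
  rewrite A0; split; first by move=> ? [].
  by move=> h; case: Wi => _ [_ /h].
exists A; split => //; split => //; split => //.
move=> J Ji AJ; case: (pselect (J 1)) => [J1|nJ1]; [by left | right].
have nprop : ~ (A `<` J).
  by move=> AJp; apply: (Amax J AJp); left; split => //; split => //; apply: AJ.
move=> x; split; last exact: AJ.
case: (pselect (J `<=` A)) => [JA | nJA]; first exact: JA.
by exfalso; apply: nprop; split.
Qed.


Lemma local_nonunit (R : idomainType) (hq : quasilocal (fun _ : R => True)) :
  exists M, is_ideal (fun _ : R => True) M /\ ~ M 1 /\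
    forall u, ~ (exists v, u * v = 1) -> M u.
Proof.
case: hq => M [[Mi [M1 _]] Muniq]; exists M; split => //; split => // u nu.
by case: (nonunit_in_max nu) => M' [M'm M'u]; apply/(Muniq _ M'm).
Qed.

Lemma local_sum (R : idomainType) (hq : quasilocal (fun _ : R => True)) (u v : R) :
  u + v = 1 -> (exists a, u * a = 1) \/ (exists a, v * a = 1).
Proof.
move=> uv; case: (local_nonunit hq) => M [[_ [_ [Madd _]]] [M1 Mnu]].
case: (pselect (exists a, u * a = 1)) => hu; first by left.
case: (pselect (exists a, v * a = 1)) => hv; first by right.
by exfalso; apply: M1; rewrite -uv; apply: Madd; apply: Mnu.
Qed.

Lemma keyD (R : idomainType) (hD : is_API (fun _ : R => True))
  (hq : quasilocal (fun _ : R => True)) (a b : R) : a != 0 -> b != 0 ->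
  exists n, (0 < n)%N /\ exists e, a ^+ n = e * b ^+ n \/ b ^+ n = e * a ^+ n.
Proof.
move=> a0 b0.
pose Y := fun c : R => c = a \/ c = b.
have Ynz : forall c, Y c -> c != 0 by move=> c [->|->].
case: (hD Y (fun _ _ => I) (ex_intro _ a (or_introl erefl)) Ynz) => n [n0 [g [_ hg]]].
exists n; split => //.
have gen : forall c, Y c -> exists d, c ^+ n = d * g.
  move=> c Yc.
  have : ideal_gen (fun _ : R => True) (fun y => exists x, Y x /\ y = x ^+ n) (c ^+ n).
    exists [:: (1, c ^+ n)]; split; last by rewrite big_seq1 mul1r.
    by move=> p; rewrite inE => /eqP -> /=; split=> //; exists c.
  by case/hg => d [_ ->]; exists d.
have : ideal_gen (fun _ : R => True) (fun y => exists x, Y x /\ y = x ^+ n) g.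
  by apply/hg; exists 1; split => //; rewrite mul1r.
case=> s [hs eg].
have [al [be hab]] : exists al be, g = al * a ^+ n + be * b ^+ n.
  rewrite eg; apply: (sum_ind (Q := fun y => exists al be, y = al * a ^+ n + be * b ^+ n)).
  - by exists 0, 0; rewrite !mul0r addr0.
  - move=> x y [a1 [b1 ->]] [a2 [b2 ->]]; exists (a1 + a2), (b1 + b2).
    by rewrite !mulrDl addrACA.
  - move=> p /hs [_ [c [[->|->] ->]]].
    + by exists p.1, 0; rewrite mul0r addr0.
    + by exists 0, p.1; rewrite mul0r add0r.
case: (gen a (or_introl erefl)) => c hc; case: (gen b (or_intror erefl)) => d hd.
have g0 : g != 0.
  apply/eqP => g0; move: hc; rewrite g0 mulr0 => /eqP.
  by rewrite expf_eq0 (negbTE a0) andbF.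
have one : al * c + be * d = 1.
  apply: (mulIf g0); by rewrite mul1r mulrDl -!mulrA -hc -hd -hab.
case: (local_sum hq one) => [[u hu] | [u hu]].
- exists (d * (al * u)); right.
  rewrite hd hc -[in LHS](mul1r g) -hu.
  by rewrite -!mulrA; congr (d * _); rewrite !(mulrCA c).
- exists (c * (be * u)); left.
  rewrite hd hc -[in LHS](mul1r g) -hu.
  by rewrite -!mulrA; congr (c * _); rewrite !(mulrCA d).
Qed.

Section Loc.
Variables (D : idomainType) (S : D -> Prop).
Hypotheses (hS : mult_closed S) (hS0 : ~ S 0).
Local Notation L := (localization S).
Local Notation tf := (@tofrac D).

Lemma tfS_neq0 s : S s -> tf s != 0.
Proof. by move=> Ss; rewrite tofrac_eq0; apply/eqP => s0; apply: hS0; rewrite -s0. Qed.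

Lemma SX s n : S s -> S (s ^+ n).
Proof. case: hS => S1 SM Ss; elim: n => [|n IH]; first by rewrite expr0. by rewrite exprS; apply: SM. Qed.

Lemma L_frac a s : S s -> L (tf a / tf s).
Proof. by move=> Ss; exists a, s. Qed.

Lemma L_tf a : L (tf a).
Proof. exists a, 1; split; first by case: hS. by rewrite tofrac1 divr1. Qed.

Lemma L0 : L 0. Proof. by rewrite -tofrac0; apply: L_tf. Qed.
Lemma L1 : L 1. Proof. by rewrite -tofrac1; apply: L_tf. Qed.

Lemma LM x y : L x -> L y -> L (x * y).
Proof.
case=> a [s [Ss ->]] [b [t [St ->]]]; exists (a * b), (s * t); split.
  by case: hS => _; apply.
by rewrite !tofracM mulf_div.
Qed.

Lemma LD x y : L x -> L y -> L (x + y).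
Proof.
case=> a [s [Ss ->]] [b [t [St ->]]]; exists (a * t + b * s), (s * t); split.
  by case: hS => _; apply.
by rewrite tofracD !tofracM addf_div ?tfS_neq0.
Qed.

Lemma LX x n : L x -> L (x ^+ n).
Proof. move=> Lx; elim: n => [|n IH]; first by rewrite expr0; apply: L1. by rewrite exprS; apply: LM. Qed.

Lemma Lsum (T : eqType) (s : seq T) F : (forall p, p \in s -> L (F p)) -> L (\sum_(p <- s) F p).
Proof. by apply: sum_ind; [exact: L0 | exact: LD]. Qed.

Lemma Lsumo n (F : 'I_n -> _) : (forall i, L (F i)) -> L (\sum_(i < n) F i).
Proof. by move=> H; apply: (big_ind L) => //; [exact: L0 | exact: LD]. Qed.

Lemma L_invS s : S s -> L (tf s)^-1.
Proof. by move=> Ss; rewrite -[_^-1]mul1r -tofrac1; apply: L_frac. Qed.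

Lemma L_API (hD : is_API (fun _ : D => True)) : is_API L.
Proof.
move=> X XL [x0 Xx0] Xnz.
pose Y := fun a : D => exists s, S s /\ X (tf a / tf s).
have YT : forall a, Y a -> True by [].
have Yne : exists a, Y a.
  by case: (XL _ Xx0) => a [s [Ss e]]; exists a, s; split=> //; rewrite -e.
have Ynz : forall a, Y a -> a != 0.
  move=> a [s [Ss Xa]]; apply/eqP => a0; move: (Xnz _ Xa).
  by rewrite a0 tofrac0 mul0r eqxx.
case: (hD Y YT Yne Ynz) => n [n0 [g [_ hg]]].
exists n; split => //; exists (tf g); split; first exact: L_tf.
have powg : forall a, Y a -> exists d, a ^+ n = d * g.
  move=> a Ya.
  have : ideal_gen (fun _ : D => True) (fun y => exists x, Y x /\ y = x ^+ n) (a ^+ n).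
    exists [:: (1, a ^+ n)]; split; last by rewrite big_seq1 mul1r.
    by move=> p; rewrite inE => /eqP -> /=; split=> //; exists a.
  by case/hg => d [_ ->]; exists d.
move=> y; split.
- case=> s [hs ->]; apply: sum_ind.
  + by exists 0; split; [exact: L0 | rewrite mul0r].
  + move=> u v [r1 [L1' ->]] [r2 [L2' ->]]; exists (r1 + r2).
    by split; [exact: LD | rewrite mulrDl].
  + move=> p /hs [Lp [x [Xx ->]]].
    case: (XL _ Xx) => a [t [St ex]].
    have Ya : Y a by exists t; rewrite -ex.
    case: (powg _ Ya) => d hd.
    exists (p.1 * tf d * (tf (t ^+ n))^-1); split.
      by apply: LM => //; [apply: LM => //; apply: L_tf | apply: L_invS => //; apply: SX].
    rewrite ex expr_div_n -!tofracXn hd tofracM.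
    by rewrite !mulrA [RHS]mulrAC.
- case=> r [Lr ->].
  have : ideal_gen (fun _ : D => True) (fun y => exists x, Y x /\ y = x ^+ n) g.
    by apply/hg; exists 1; split => //; rewrite mul1r.
  case=> s [hs ->].
  rewrite rmorph_sum big_distrr /=.
  apply: sum_ind.
  + by exists [::]; split => //; rewrite big_nil.
  + move=> u v [s1 [h1 ->]] [s2 [h2 ->]]; exists (s1 ++ s2); split; last by rewrite big_cat.
    by move=> p; rewrite mem_cat => /orP [] ?; [exact: h1 | exact: h2].
  + move=> p /hs [_ [a [[t [St Xa]] ->]]].
    exists [:: (r * tf p.1 * tf (t ^+ n), (tf a / tf t) ^+ n)]; split.
      move=> q; rewrite inE => /eqP -> /=; split.
        by apply: LM; [apply: LM => //| ]; apply: L_tf.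
      by exists (tf a / tf t); split.
    rewrite big_seq1 /= tofracM expr_div_n !tofracXn.
    rewrite -!mulrA; congr (r * (tf p.1 * _)).
    by rewrite mulrCA divff ?mulr1 // expf_neq0 // tfS_neq0.
Qed.
Lemma fhelp (F : fieldType) (e B T U : F) : T != 0 -> e * B / U = e * T / U * (B / T).
Proof.
move=> T0; rewrite mulf_div -[e * T * B]mulrA [T * B]mulrC mulrA.
by rewrite -mulf_div divff // mulr1.
Qed.

Lemma keyL (hD : is_API (fun _ : D => True)) (hq : quasilocal (fun _ : D => True))
  x y : L x -> L y -> x != 0 -> y != 0 ->
  exists n, (0 < n)%N /\ exists r, L r /\ (x ^+ n = r * y ^+ n \/ y ^+ n = r * x ^+ n).
Proof.
case=> a [s [Ss ->]] [b [t [St ->]]] x0 y0.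
have a0 : a != 0 by apply: contraNneq x0 => ->; rewrite tofrac0 mul0r.
have b0 : b != 0 by apply: contraNneq y0 => ->; rewrite tofrac0 mul0r.
case: (keyD hD hq a0 b0) => n [n0 [e [he|he]]]; exists n; split => //.
- exists (tf e * tf (t ^+ n) * (tf (s ^+ n))^-1); split.
    by apply: LM => //; [apply: LM => //; apply: L_tf | apply: L_invS => //; apply: SX].
  left; rewrite !expr_div_n -!tofracXn he tofracM; apply: fhelp.
  by apply: tfS_neq0; apply: SX.
- exists (tf e * tf (s ^+ n) * (tf (t ^+ n))^-1); split.
    by apply: LM => //; [apply: LM => //; apply: L_tf | apply: L_invS => //; apply: SX].
  right; rewrite !expr_div_n -!tofracXn he tofracM; apply: fhelp.
  by apply: tfS_neq0; apply: SX.
Qed.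

Lemma add_unit x y r w n : L x -> L y -> L r -> L w -> (0 < n)%N ->
  x ^+ n = r * y ^+ n -> (x + y) * w = 1 -> exists u, L u /\ y * u = 1.
Proof.
move=> Lx Ly Lr Lw; case: n => // n _ hx hw.
set z := x + y in hw *.
have Lz : L z by apply: LD.
have zx : z - x = y by rewrite /z addrAC subrr add0r.
have e := subrXX z x n.+1; rewrite zx in e.
set Sg := \sum_(i < n.+1) _ in e.
have hz : z ^+ n.+1 = y * (r * y ^+ n + Sg).
  move/eqP: e; rewrite subr_eq => /eqP ->.
  by rewrite hx mulrDr addrC; congr (_ + _); rewrite exprS mulrCA.
exists ((r * y ^+ n + Sg) * w ^+ n.+1); split.
  apply: LM => //; last by apply: LX.
  apply: LD => //; first by apply: LM => //; apply: LX.
  by apply: Lsumo => // i; apply: LM => //; apply: LX.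
by rewrite mulrA -hz -exprMn hw expr1n.
Qed.

Definition Inu := fun x => L x /\ ~ (exists y, L y /\ x * y = 1).

Lemma Inu_ideal (hD : is_API (fun _ : D => True)) (hq : quasilocal (fun _ : D => True)) :
  is_ideal L Inu.
Proof.
split; first by move=> x [].
split; [|split].
- split; first exact: L0.
  by case=> y [_]; rewrite mul0r => /eqP; rewrite eq_sym oner_eq0.
- move=> x y [Lx nx] [Ly ny]; split; first exact: LD.
  case=> w [Lw hw].
  case: (eqVneq x 0) => [x0|x0].
    by apply: ny; exists w; split => //; rewrite -hw x0 add0r.
  case: (eqVneq y 0) => [y0|y0].
    by apply: nx; exists w; split => //; rewrite -hw y0 addr0.
  case: (keyL hD hq Lx Ly x0 y0) => n [n0 [r [Lr [h|h]]]].
  + by apply: ny; apply: (add_unit Lx Ly Lr Lw n0 h hw).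
  + by apply: nx; apply: (add_unit Ly Lx Lr Lw n0 h); rewrite addrC.
- move=> a x La [Lx nx]; split; first exact: LM.
  case=> y [Ly h]; apply: nx; exists (a * y); split; first exact: LM.
  by rewrite mulrCA mulrA.
Qed.

Lemma theorem4_sec (hD : is_API (fun _ : D => True)) :
  is_API (localization S) /\
  (quasilocal (fun _ : D => True) -> quasilocal (localization S)).
Proof.
split; first exact: L_API.
move=> hq; exists Inu.
have I1 : ~ Inu 1 by case=> _; apply; exists 1; split; [exact: L1 | rewrite mulr1].
have propsub : forall J, is_ideal L J -> ~ J 1 -> forall x, J x -> Inu x.
  move=> J [JL [_ [_ Jm]]] J1 x Jx; split; first exact: JL.
  by case=> y [Ly h]; apply: J1; rewrite -h mulrC; apply: Jm.
have Imax : is_maximal_ideal L Inu.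
  split; first exact: Inu_ideal.
  split => // J Ji IJ; case: (pselect (J 1)) => [J1|J1]; [by left|right].
  by move=> x; split; [apply: propsub | apply: IJ].
split => // J [Ji [J1 Jmax]] x.
case: (Jmax Inu (Inu_ideal hD hq) (propsub J Ji J1)) => [//|h].
by split => /h.
Qed.
End Loc.

Theorem theorem4 (D : idomainType) (S : D -> Prop)
  (hS : mult_closed S) (hS0 : ~ S 0)
  (hD : is_API (fun _ : D => True)) :
  is_API (localization S) /\
  (quasilocal (fun _ : D => True) -> quasilocal (localization S)).
Proof. exact: theorem4_sec. Qed.
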